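(* For $\tau,t\in\mathbb{R}$ and integer $n\ge0$ let $$\mu_{2n}(\tau,t)=\int_{-\infty}^{\infty}x^{2n}\exp(-x^6+\tau x^4+tx^2)\,dx.$$ Then $$\frac{\partial^3\mu_{2n}}{\partial t^3}-\tfrac23\tau\frac{\partial^2\mu_{2n}}{\partial t^2}-\tfrac13t\frac{\partial\mu_{2n}}{\partial t}-\tfrac16(2n+1)\mu_{2n}=0.$$ *)

(* Defs.v *)
From Stdlib Require Import Reals.
From Coquelicot Require Import Coquelicot.
Open Scope R_scope.

Definition mu (n : nat) (tau t : R) : R :=
  RInt_gen (fun x => x ^ (2 * n) * exp (- x ^ 6 + tau * x ^ 4 + t * x ^ 2))
    (Rbar_locally m_infty) (Rbar_locally p_infty).

(* Main.v *)
Require Import Defs.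
From Stdlib Require Import Reals Lra Lia Psatz Classical.
From Coquelicot Require Import Coquelicot.
Open Scope R_scope.


Lemma poly_aux (A B : R) : 0 <= A -> 0 <= B ->
  exists D, 0 <= D /\ forall y, 0 <= y -> A*y^2 + B*y <= y^3 + D.
Proof.
  intros HA HB. set (Y := A + B + 1).
  exists (A*Y^2 + B*Y). split. unfold Y; nra.
  intros y Hy. destruct (Rle_dec y Y) as [H|H].
  - assert (A*y^2 <= A*Y^2) by (apply Rmult_le_compat_l; [lra| nra]).
    assert (B*y <= B*Y) by nra. nra.
  - assert (y^3 >= Y*y^2) by nra. unfold Y in *. nra.
Qed.

Lemma exp_INR_mult k w : exp (INR k * w) = exp w ^ k.
Proof.
  induction k. simpl. rewrite Rmult_0_l. apply exp_0.
  rewrite S_INR. replace ((INR k + 1) * w) with (INR k * w + w) by ring.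
  rewrite exp_plus, IHk. simpl. ring.
Qed.

Lemma exp_pow_ge k v : (0 < k)%nat -> 0 <= v -> (1 + v / INR k) ^ k <= exp v.
Proof.
  intros Hk Hv. assert (Hk' : 0 < INR k) by (apply lt_0_INR; lia).
  replace v with (INR k * (v / INR k)) at 2 by (field; lra).
  rewrite exp_INR_mult. apply pow_incr. split.
  assert (0 <= v / INR k) by (apply Rdiv_le_0_compat; lra). lra.
  apply exp_ineq1_le.
Qed.

Lemma bound_main m tau s : exists C, 0 < C /\ forall x,
  (1 + x^2)^m * exp (- x^6 + tau*x^4 + s*x^2) <= C.
Proof.
  destruct (poly_aux (Rabs tau) (Rabs s + INR (S m))) as [D [HD0 HD]].
  apply Rabs_pos. pose proof (pos_INR (S m)). pose proof (Rabs_pos s). lra.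
  exists (exp D). split. apply exp_pos. intros x.
  set (u := x^6 - tau*x^4 - s*x^2).
  assert (Hk : 0 < INR (S m)) by (apply lt_0_INR; lia).
  assert (Hu : INR (S m) * x^2 <= u + D).
  { pose proof (HD (x^2) (pow2_ge_0 x)) as H.
    assert (tau * x^4 <= Rabs tau * (x^2)^2).
    { replace (x^4) with ((x^2)^2) by ring. apply Rmult_le_compat_r. apply pow2_ge_0. apply Rle_abs. }
    assert (s * x^2 <= Rabs s * x^2). { apply Rmult_le_compat_r. apply pow2_ge_0. apply Rle_abs. }
    unfold u. replace (x^6) with ((x^2)^3) by ring. nra. }
  assert (H1 : (1 + x^2)^(S m) <= exp (u + D)).
  { eapply Rle_trans; [|apply (exp_pow_ge (S m)); [lia|]].
    apply pow_incr. split. pose proof (pow2_ge_0 x); lra.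
    apply Rplus_le_compat_l. apply (Rmult_le_reg_l (INR (S m))); auto.
    replace (INR (S m) * ((u + D) / INR (S m))) with (u + D) by (field; lra). lra.
    pose proof (pow2_ge_0 x). nra. }
  assert (H2 : (1 + x^2)^m <= (1 + x^2)^(S m)).
  { pose proof (pow2_ge_0 x) as Hx2. assert (Hp : 0 <= (1+x^2)^m). { apply pow_le. lra. }
    replace ((1+x^2)^(S m)) with ((1+x^2)*(1+x^2)^m) by (simpl; ring).
    set (P := (1+x^2)^m) in *. nra. }
  replace (- x^6 + tau*x^4 + s*x^2) with (- u) by (unfold u; ring).
  replace (exp D) with (exp (u + D) * exp (- u)) by (rewrite <- exp_plus; f_equal; ring).
  apply Rmult_le_compat_r. left; apply exp_pos. lra.
Qed.


Lemma ball_R (L e y : R) : Rabs (y - L) < e -> ball L e y.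
Proof. intros H. unfold ball; simpl. unfold AbsRing_ball, abs, minus, plus, opp; simpl. exact H. Qed.

Lemma mono_lim_p (G : R -> R) B : (forall a b, a <= b -> G a <= G b) ->
  (forall x, G x <= B) -> exists L, filterlim G (Rbar_locally p_infty) (locally L).
Proof.
  intros Hm Hb.
  set (E := fun y => exists x, y = G x).
  destruct (completeness E) as [L [HL1 HL2]].
  { exists B. intros y [x ->]. apply Hb. }
  { exists (G 0). exists 0. reflexivity. }
  exists L. apply filterlim_locally. intros eps.
  assert (Hex : exists x0, L - eps < G x0).
  { apply NNPP. intros Hn. assert (L <= L - eps).
    { apply HL2. intros y [x ->]. apply Rnot_lt_le. intros Hc. apply Hn. exists x. exact Hc. }
    pose proof (cond_pos eps). lra. }
  destruct Hex as [x0 Hx0]. simpl. exists x0. intros x Hx.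
  apply ball_R. assert (G x <= L) by (apply HL1; exists x; reflexivity).
  assert (G x0 <= G x) by (apply Hm; lra).
  apply Rabs_def1; lra.
Qed.

Lemma mono_lim_m (G : R -> R) B : (forall a b, a <= b -> G a <= G b) ->
  (forall x, B <= G x) -> exists L, filterlim G (Rbar_locally m_infty) (locally L).
Proof.
  intros Hm Hb.
  set (E := fun y => exists x, y = - G x).
  destruct (completeness E) as [L [HL1 HL2]].
  { exists (- B). intros y [x ->]. specialize (Hb x). lra. }
  { exists (- G 0). exists 0. reflexivity. }
  exists (- L). apply filterlim_locally. intros eps.
  assert (Hex : exists x0, L - eps < - G x0).
  { apply NNPP. intros Hn. assert (L <= L - eps).
    { apply HL2. intros y [x ->]. apply Rnot_lt_le. intros Hc. apply Hn. exists x. exact Hc. }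
    pose proof (cond_pos eps). lra. }
  destruct Hex as [x0 Hx0]. simpl. exists x0. intros x Hx.
  apply ball_R. assert (- G x <= L) by (apply HL1; exists x; reflexivity).
  assert (G x <= G x0) by (apply Hm; lra).
  apply Rabs_def1; lra.
Qed.

Lemma atan_int (C a b : R) : is_RInt (fun y => C / (1 + y^2)) a b (C * (atan b - atan a)).
Proof.
  replace (C * (atan b - atan a)) with (minus ((fun y => C * atan y) b) ((fun y => C * atan y) a))
    by (unfold minus, plus, opp; simpl; ring).
  apply (is_RInt_derive (fun y => C * atan y) (fun y => C / (1 + y^2))).
  - intros x _. apply is_derive_Reals.
    replace (C / (1 + x^2)) with (C * / (1 + x^2)) by (unfold Rdiv; ring).
    apply derivable_pt_lim_scal. apply derivable_pt_lim_atan.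
  - intros x _. apply (ex_derive_continuous (fun y => C / (1 + y^2))). auto_derive.
    pose proof (pow2_ge_0 x). lra.
Qed.

Lemma ex_gen (f : R -> R) (C : R) : (forall x, continuous f x) -> (forall x, 0 <= f x) ->
  (forall x, f x * (1 + x^2) <= C) ->
  ex_RInt_gen f (Rbar_locally m_infty) (Rbar_locally p_infty).
Proof.
  intros Hc Hp Hb.
  assert (HC : 0 <= C). { specialize (Hb 0). specialize (Hp 0). nra. }
  assert (Hex : forall a b, ex_RInt f a b) by (intros; apply (@ex_RInt_continuous R_CompleteNormedModule); auto).
  set (G := fun x => RInt f 0 x).
  assert (HG : forall x, is_derive G x (f x)).
  { intros x. apply (is_derive_RInt f G 0 x). apply filter_forall. intros b. apply (@RInt_correct R_CompleteNormedModule). auto. auto. }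
  assert (Hab : forall a b, a <= b -> 0 <= G b - G a <= C * PI).
  { intros a b Hab. assert (HR : G b - G a = RInt f a b).
    { unfold G. rewrite <- (RInt_Chasles f 0 a b); auto. unfold plus; simpl. ring. }
    rewrite HR. split. apply RInt_ge_0; auto.
    apply Rle_trans with (RInt (fun y => C / (1 + y^2)) a b).
    apply RInt_le; auto. eexists; apply atan_int.
    intros x _. specialize (Hb x). pose proof (pow2_ge_0 x).
    apply (Rmult_le_reg_r (1 + x^2)). lra. unfold Rdiv. rewrite Rmult_assoc, Rinv_l. lra. lra.
    rewrite (is_RInt_unique _ _ _ _ (atan_int C a b)).
    pose proof (atan_bound a). pose proof (atan_bound b). apply Rmult_le_compat_l; lra. }
  assert (HG0 : G 0 = 0) by (unfold G; apply (@RInt_point R_CompleteNormedModule)).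
  destruct (mono_lim_p G (C * PI)) as [Lp HLp].
  { intros a b H. specialize (Hab a b H). lra. }
  { intros x. destruct (Rle_dec 0 x). specialize (Hab 0 x r). lra.
    specialize (Hab x 0). lra. }
  destruct (mono_lim_m G (- (C * PI))) as [Lm HLm].
  { intros a b H. specialize (Hab a b H). lra. }
  { intros x. destruct (Rle_dec 0 x). specialize (Hab 0 x r). pose proof PI_RGT_0. nra.
    specialize (Hab x 0). lra. }
  exists (Lp - Lm).
  assert (HD : forall x, Derive G x = f x) by (intros; apply is_derive_unique; auto).
  apply (is_RInt_gen_ext (Derive G)).
  apply filter_forall. intros ab x _. apply HD.
  apply is_RInt_gen_Derive; auto.
  apply filter_forall. intros ab x _. eexists; apply HG.
  apply filter_forall. intros ab x _. apply (continuous_ext f). intros; rewrite HD; auto. auto.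
Qed.


Lemma exp_P1 y : exp y * (1 - y) <= 1.
Proof.
  pose proof (exp_pos y). pose proof (exp_ineq1_le (- y)).
  assert (exp y * exp (- y) = 1) by (rewrite <- exp_plus; replace (y + - y) with 0 by ring; apply exp_0).
  nra.
Qed.

Lemma exp_quad y : Rabs (exp y - 1 - y) <= y^2 * exp (Rabs y).
Proof.
  pose proof (exp_P1 y). pose proof (exp_ineq1_le y). pose proof (exp_pos y).
  assert (Hq : Rabs (exp y - 1) <= Rabs y * exp (Rabs y)).
  { destruct (Rle_dec 0 y).
    rewrite !Rabs_right by lra. nra.
    assert (exp y < 1) by (rewrite <- exp_0; apply exp_increasing; lra). rewrite (Rabs_left1 (exp y - 1)) by lra. rewrite Rabs_left by lra.
    pose proof (exp_ineq1_le (- y)). nra. }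
  rewrite Rabs_right by lra.
  assert (exp y - 1 - y <= y * (exp y - 1)) by nra.
  assert (y * (exp y - 1) <= Rabs y * Rabs (exp y - 1)).
  { rewrite <- Rabs_mult. apply Rle_abs. }
  assert (Rabs y * Rabs (exp y - 1) <= Rabs y * (Rabs y * exp (Rabs y))).
  { apply Rmult_le_compat_l. apply Rabs_pos. auto. }
  replace (y^2) with (Rabs y * Rabs y). nra.
  rewrite <- Rabs_mult. rewrite Rabs_right. ring. nra.
Qed.

Definition F (m : nat) (tau s : R) (x : R) : R := x^(2*m) * exp (- x^6 + tau*x^4 + s*x^2).

Lemma F_cont m tau s x : continuous (F m tau s) x.
Proof. apply (ex_derive_continuous (F m tau s)). unfold F. auto_derive. auto. Qed.

Lemma F_nonneg m tau s x : 0 <= F m tau s x.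
Proof. unfold F. rewrite pow_mult. apply Rmult_le_pos. apply pow_le, pow2_ge_0. left; apply exp_pos. Qed.

Lemma F_bound m tau s : exists C, forall x, F m tau s x * (1 + x^2) <= C.
Proof.
  destruct (bound_main (S m) tau s) as [C [_ HC]]. exists C. intros x.
  eapply Rle_trans; [|apply (HC x)]. unfold F. rewrite pow_mult.
  replace ((1+x^2)^(S m)) with ((1+x^2)*(1+x^2)^m) by (simpl; ring).
  pose proof (exp_pos (- x ^ 6 + tau * x ^ 4 + s * x ^ 2)).
  pose proof (pow2_ge_0 x).
  assert ((x^2)^m <= (1 + x^2)^m) by (apply pow_incr; lra).
  assert (0 <= (x^2)^m) by (apply pow_le; lra).
  set (e := exp _) in *. set (p := (x^2)^m) in *. set (q := (1+x^2)^m) in *.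
  assert (0 <= 1 + x^2) by lra. assert (p * e <= q * e) by (apply Rmult_le_compat_r; lra).
  replace ((1 + x^2) * q * e) with ((q*e)*(1+x^2)) by ring. apply Rmult_le_compat_r; lra.
Qed.

Lemma F_ex m tau s : ex_RInt_gen (F m tau s) (Rbar_locally m_infty) (Rbar_locally p_infty).
Proof.
  destruct (F_bound m tau s) as [C HC]. apply (ex_gen _ C); auto using F_cont, F_nonneg.
Qed.

Lemma F_is m tau s : is_RInt_gen (F m tau s) (Rbar_locally m_infty) (Rbar_locally p_infty) (mu m tau s).
Proof. apply (@RInt_gen_correct R_CompleteNormedModule); try apply Proper_StrongProper, Rbar_locally_filter. apply F_ex. Qed.


Lemma F_shift m tau s h x : F m tau (s + h) x = F m tau s x * exp (h * x^2).
Proof. unfold F. rewrite Rmult_assoc, <- exp_plus. f_equal. f_equal. ring. Qed.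

Lemma F_S m tau s x : F (S m) tau s x = F m tau s x * x^2.
Proof. unfold F. replace (2 * S m)%nat with (2 * m + 2)%nat by lia. rewrite pow_add. ring. Qed.

Lemma mu_diff_bound m tau s h : Rabs h <= 1 ->
  Rabs (mu m tau (s+h) - mu m tau s - h * mu (S m) tau s) <= h^2 * mu (S (S m)) tau (s+1).
Proof.
  intros Hh.
  pose proof (is_RInt_gen_minus _ _ _ _ (is_RInt_gen_minus _ _ _ _ (F_is m tau (s+h)) (F_is m tau s))
     (is_RInt_gen_scal _ h _ (F_is (S m) tau s))) as I1.
  pose proof (is_RInt_gen_scal _ (h^2) _ (F_is (S (S m)) tau (s+1))) as I2.
  assert (Hfilt : filter_prod (Rbar_locally m_infty) (Rbar_locally p_infty) (fun ab : R * R => fst ab <= snd ab)).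
  { apply (Filter_prod _ _ _ (fun x => x < 0) (fun x => 0 < x)).
    exists 0; auto. exists 0; auto. intros x y H1 H2; simpl; lra. }
  assert (Hpt : forall x : R, norm (minus (minus (F m tau (s + h) x) (F m tau s x)) (scal h (F (S m) tau s x)))
     <= scal (h ^ 2) (F (S (S m)) tau (s + 1) x)).
  { intros x. unfold norm, minus, plus, opp, scal; simpl. unfold abs, mult; simpl. 
    rewrite (F_S (S m)), !F_S, !F_shift.
    pose proof (F_nonneg m tau s x) as HF. set (Fx := F m tau s x) in *.
    replace (Fx * exp (h * x ^ 2) + - Fx + - (h * (Fx * x ^ 2))) with (Fx * (exp (h * x^2) - 1 - h * x^2)) by ring.
    rewrite Rabs_mult, (Rabs_right Fx) by lra.
    pose proof (exp_quad (h * x^2)) as Q.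
    assert (E : exp (Rabs (h * x^2)) <= exp (1 * x^2)).
    { assert (Rabs (h * x^2) <= 1 * x^2).
      { rewrite Rabs_mult, (Rabs_right (x^2)) by (apply Rle_ge, pow2_ge_0).
        apply Rmult_le_compat_r. apply pow2_ge_0. lra. }
      destruct (Rle_lt_or_eq_dec _ _ H) as [H'|H']. left; apply exp_increasing; auto. rewrite H'; lra. }
    assert (0 <= (h * x^2)^2) by apply pow2_ge_0.
    assert ((h * x^2)^2 * exp (Rabs (h * x^2)) <= (h * x^2)^2 * exp (1 * x^2)) by (apply Rmult_le_compat_l; auto).
    replace (h * (h * 1) * (Fx * exp (1 * x ^ 2) * x ^ 2 * x ^ 2)) with (Fx * ((h * x^2)^2 * exp (1 * x^2))) by ring.
    apply Rmult_le_compat_l; lra. }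
  pose proof (RInt_gen_norm (V:=R_CompleteNormedModule) _ _ _ _ Hfilt
    (filter_forall _ (fun ab x _ => Hpt x)) I1 I2) as H.
  unfold norm, minus, plus, opp, scal in H; simpl in H. unfold abs, mult in H; simpl in H.
  replace (h^2) with (h*(h*1)) by ring. unfold Rminus. exact H.
Qed.

Lemma mu_derive m tau s : is_derive (fun s => mu m tau s) s (mu (S m) tau s).
Proof.
  apply is_derive_Reals. intros eps Heps.
  set (K := Rabs (mu (S (S m)) tau (s+1)) + 1).
  assert (HK : 0 < K) by (unfold K; pose proof (Rabs_pos (mu (S (S m)) tau (s+1))); lra).
  assert (Hd : 0 < Rmin 1 (eps / K)) by (apply Rmin_pos; [lra | apply Rdiv_lt_0_compat; lra]).
  exists (mkposreal _ Hd). intros h Hh0 Hh. simpl in Hh.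
  assert (Hh1 : Rabs h <= 1) by (pose proof (Rmin_l 1 (eps/K)); lra).
  assert (Hh2 : Rabs h < eps / K) by (pose proof (Rmin_r 1 (eps/K)); lra).
  pose proof (mu_diff_bound m tau s h Hh1) as B.
  replace ((mu m tau (s + h) - mu m tau s) / h - mu (S m) tau s)
    with ((mu m tau (s + h) - mu m tau s - h * mu (S m) tau s) / h) by (field; auto).
  rewrite Rabs_div by auto.
  assert (Hha : 0 < Rabs h) by (apply Rabs_pos_lt; auto).
  apply (Rmult_lt_reg_r (Rabs h)); auto. unfold Rdiv. rewrite Rmult_assoc, Rinv_l, Rmult_1_r by lra.
  assert (h^2 * mu (S (S m)) tau (s+1) <= Rabs h * Rabs h * K).
  { replace (h^2) with (Rabs h * Rabs h). 
    apply Rmult_le_compat_l. apply Rmult_le_pos; apply Rabs_pos.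
    pose proof (Rle_abs (mu (S (S m)) tau (s+1))). unfold K; lra.
    rewrite <- Rabs_mult. rewrite Rabs_right. ring. apply Rle_ge. replace (h*h) with (h^2) by ring. apply pow2_ge_0. }
  assert (Rabs h * K < eps) by (apply (Rmult_lt_reg_r (/ K)); [apply Rinv_0_lt_compat; lra|]; rewrite Rmult_assoc, Rinv_r, Rmult_1_r by lra; exact Hh2).
  assert (Rabs h * Rabs h * K < eps * Rabs h).
  { replace (Rabs h * Rabs h * K) with ((Rabs h * K) * Rabs h) by ring. apply Rmult_lt_compat_r; auto. }
  lra.
Qed.

Lemma mu_Derive_n n tau k s : Derive_n (fun s => mu n tau s) k s = mu (n + k) tau s.
Proof.
  revert s. induction k; intros s.
  - simpl. rewrite Nat.add_0_r. reflexivity.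
  - simpl. rewrite (Derive_ext _ (fun s => mu (n + k) tau s)) by auto.
    replace (n + S k)%nat with (S (n + k)) by lia.
    apply is_derive_unique, mu_derive.
Qed.


Lemma lim0 (g : R -> R) C : (forall x, Rabs (g x) * (1 + x^2) <= C) ->
  filterlim g (Rbar_locally p_infty) (locally 0) /\ filterlim g (Rbar_locally m_infty) (locally 0).
Proof.
  intros Hb.
  assert (Key : forall x eps, 0 < eps -> (Rabs C + 1) / eps < Rabs x -> Rabs (g x) < eps).
  { intros x eps He Hx. specialize (Hb x).
    assert (Hx' : Rabs C + 1 < eps * Rabs x).
    { apply (Rmult_lt_compat_l eps) in Hx; auto.
      replace (eps * ((Rabs C + 1) / eps)) with (Rabs C + 1) in Hx by (field; lra). exact Hx. }
    pose proof (Rle_abs C). pose proof (Rabs_pos (g x)).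
    assert (Rabs x <= 1 + x^2).
    { replace (x^2) with (Rabs x * Rabs x). pose proof (Rabs_pos x). nra.
      rewrite <- Rabs_mult. rewrite Rabs_right. ring. replace (x*x) with (x^2) by ring. apply Rle_ge, pow2_ge_0. }
    apply Rnot_le_lt. intros Hc.
    assert (eps * Rabs x <= Rabs (g x) * (1 + x^2)).
    { pose proof (Rabs_pos x). apply Rmult_le_compat; auto; lra. }
    lra. }
  split; apply filterlim_locally; intros eps; simpl.
  - exists ((Rabs C + 1) / eps). intros x Hx. apply ball_R. rewrite Rminus_0_r.
    apply Key. apply cond_pos. assert (0 < (Rabs C + 1) / eps).
    { apply Rdiv_lt_0_compat. pose proof (Rabs_pos C); lra. apply cond_pos. }
    rewrite (Rabs_right x); lra.
  - exists (- ((Rabs C + 1) / eps)). intros x Hx. apply ball_R. rewrite Rminus_0_r.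
    apply Key. apply cond_pos. assert (0 < (Rabs C + 1) / eps).
    { apply Rdiv_lt_0_compat. pose proof (Rabs_pos C); lra. apply cond_pos. }
    rewrite (Rabs_left x); lra.
Qed.

Definition Gf (n : nat) (tau t : R) (x : R) : R := x^(S (2*n)) * exp (- x^6 + tau*x^4 + t*x^2).

Definition Hf (n : nat) (tau t : R) (x : R) : R :=
  plus (plus (plus (scal (2 * INR n + 1) (F n tau t x)) (scal (-6) (F (S (S (S n))) tau t x)))
    (scal (4 * tau) (F (S (S n)) tau t x))) (scal (2 * t) (F (S n) tau t x)).

Lemma G_derive n tau t x : is_derive (Gf n tau t) x (Hf n tau t x).
Proof.
  unfold Gf, Hf. rewrite !F_S. unfold F.
  replace (2 * INR n) with (INR (2*n)) by (rewrite mult_INR; simpl; ring).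
  generalize (2*n)%nat; intro N.
  unfold plus, scal; simpl; unfold mult; simpl.
  auto_derive. auto. destruct N as [|k]. simpl; ring. rewrite !S_INR. simpl pow. simpl pred. ring.
Qed.

Lemma G_bound n tau t : exists C, forall x, Rabs (Gf n tau t x) * (1 + x^2) <= C.
Proof.
  destruct (bound_main (S (S n)) tau t) as [C [_ HC]]. exists C. intros x.
  eapply Rle_trans; [|apply (HC x)]. unfold Gf.
  set (e := exp _). assert (He : 0 < e) by apply exp_pos.
  rewrite Rabs_mult, (Rabs_right e) by lra.
  assert (Hx : Rabs (x ^ S (2 * n)) <= (1 + x^2)^(S n)).
  { replace (x ^ S (2 * n)) with (x * (x^2)^n) by (rewrite <- pow_mult; simpl; ring).
    rewrite Rabs_mult, (Rabs_right ((x^2)^n)) by (apply Rle_ge, pow_le, pow2_ge_0).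
    replace ((1 + x^2)^(S n)) with ((1 + x^2) * (1 + x^2)^n) by (simpl; ring).
    apply Rmult_le_compat. apply Rabs_pos. apply pow_le, pow2_ge_0.
    replace (x^2) with (Rabs x * Rabs x). pose proof (Rabs_pos x). pose proof (pow2_ge_0 (Rabs x - 1)). nra.
    rewrite <- Rabs_mult. rewrite Rabs_right. ring. replace (x*x) with (x^2) by ring. apply Rle_ge, pow2_ge_0.
    apply pow_incr. pose proof (pow2_ge_0 x). lra. }
  replace ((1 + x^2)^(S (S n))) with ((1 + x^2)^(S n) * (1 + x^2)) by (simpl; ring).
  pose proof (Rabs_pos (x ^ S (2 * n))). pose proof (pow2_ge_0 x).
  replace (Rabs (x ^ S (2 * n)) * e * (1 + x ^ 2)) with ((Rabs (x ^ S (2 * n)) * (1 + x^2)) * e) by ring.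
  replace ((1 + x ^ 2) ^ S n * (1 + x ^ 2) * e) with (((1 + x ^ 2) ^ S n * (1 + x ^ 2)) * e) by ring.
  apply Rmult_le_compat_r. lra. apply Rmult_le_compat_r. lra. auto.
Qed.


Lemma F_exd m tau s x : ex_derive (F m tau s) x.
Proof. unfold F. auto_derive. auto. Qed.
Lemma H_cont n tau t x : continuous (Hf n tau t) x.
Proof.
  apply (ex_derive_continuous (Hf n tau t)). unfold Hf.
  apply (ex_derive_plus (fun x => plus (plus (scal (2 * INR n + 1) (F n tau t x)) (scal (-6) (F (S (S (S n))) tau t x)))
    (scal (4 * tau) (F (S (S n)) tau t x))) (fun x => scal (2 * t) (F (S n) tau t x))).
  apply (ex_derive_plus (fun x => plus (scal (2 * INR n + 1) (F n tau t x)) (scal (-6) (F (S (S (S n))) tau t x)))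
    (fun x => (scal (4 * tau) (F (S (S n)) tau t x)))).
  apply (ex_derive_plus (fun x => (scal (2 * INR n + 1) (F n tau t x))) (fun x => (scal (-6) (F (S (S (S n))) tau t x)))).
  all: apply ex_derive_scal; apply F_exd.
Qed.

Lemma ident n tau t :
  (2 * INR n + 1) * mu n tau t + (-6) * mu (S (S (S n))) tau t
  + (4 * tau) * mu (S (S n)) tau t + (2 * t) * mu (S n) tau t = 0.
Proof.
  pose proof (is_RInt_gen_plus _ _ _ _
    (is_RInt_gen_plus _ _ _ _
      (is_RInt_gen_plus _ _ _ _
        (is_RInt_gen_scal _ (2 * INR n + 1) _ (F_is n tau t))
        (is_RInt_gen_scal _ (-6) _ (F_is (S (S (S n))) tau t)))
      (is_RInt_gen_scal _ (4 * tau) _ (F_is (S (S n)) tau t)))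
    (is_RInt_gen_scal _ (2 * t) _ (F_is (S n) tau t))) as I.
  apply (is_RInt_gen_ext _ (Hf n tau t)) in I; [| apply filter_forall; intros ab x _; reflexivity].
  destruct (G_bound n tau t) as [C HC]. destruct (lim0 _ _ HC) as [Lp Lm].
  assert (J : is_RInt_gen (Hf n tau t) (Rbar_locally m_infty) (Rbar_locally p_infty) (0 - 0)).
  { assert (HD : forall x, Derive (Gf n tau t) x = Hf n tau t x) by (intros; apply is_derive_unique, G_derive).
    apply (is_RInt_gen_ext (Derive (Gf n tau t))).
    apply filter_forall. intros ab x _. apply HD.
    apply is_RInt_gen_Derive; auto.
    apply filter_forall. intros ab x _. eexists; apply G_derive.
    apply filter_forall. intros ab x _. apply (continuous_ext (Hf n tau t)). intros; rewrite HD; auto.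
    apply H_cont. }
  apply (is_RInt_gen_unique (V:=R_CompleteNormedModule)) in I; try apply Proper_StrongProper, Rbar_locally_filter.
  apply (is_RInt_gen_unique (V:=R_CompleteNormedModule)) in J; try apply Proper_StrongProper, Rbar_locally_filter.
  rewrite I in J. unfold plus, scal in J; simpl in J; unfold mult in J; simpl in J. lra.
Qed.

Theorem lemma5p5 (n : nat) (tau t : R) :
  Derive_n (fun s => mu n tau s) 3 t
  - 2 / 3 * tau * Derive_n (fun s => mu n tau s) 2 t
  - 1 / 3 * t * Derive_n (fun s => mu n tau s) 1 t
  - 1 / 6 * (2 * INR n + 1) * mu n tau t = 0.
Proof.
  rewrite !mu_Derive_n.
  replace (n + 3)%nat with (S (S (S n))) by lia.
  replace (n + 2)%nat with (S (S n)) by lia.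
  replace (n + 1)%nat with (S n) by lia.
  pose proof (ident n tau t) as Hid.
  replace (mu (S (S (S n))) tau t - 2 / 3 * tau * mu (S (S n)) tau t - 1 / 3 * t * mu (S n) tau t -
    1 / 6 * (2 * INR n + 1) * mu n tau t) with
    ((-1/6) * ((2 * INR n + 1) * mu n tau t + (-6) * mu (S (S (S n))) tau t
  + (4 * tau) * mu (S (S n)) tau t + (2 * t) * mu (S n) tau t)) by field.
  rewrite Hid. ring.
Qed.
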